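(* Let $C$ be the plane affine curve over $\mathbb{R}$ with equation $x_1^2+x_2^2=1$ and $V=C\times\mathbb{A}^1$, so $\mathbb{R}[V]=\mathbb{R}[C][y]$. Let $f\in\mathbb{R}[V]$ and $b\in\mathbb{R}[C]$ be sums of squares (in $\mathbb{R}[V]$ and $\mathbb{R}[C]$ respectively), and assume that $b$ has only real zeros on $C$ (i.e. all zeros of $b$ in $C(\mathbb{C})$ lie in $C(\mathbb{R})$). If there is $g\in\mathbb{R}[V]$ with $f=bg$, then $g$ is a sum of squares in $\mathbb{R}[V]$. *)

(* Defs.v *)
From HB Require Import structures.
From mathcomp Require Import all_boot all_order all_algebra.
From mathcomp Require Import mpoly.
From mathcomp Require Import complex.
From mathcomp Require Import reals.
Set Implicit Arguments. Unset Strict Implicit. Unset Printing Implicit Defensive.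
Import Order.TTheory GRing.Theory Num.Theory.
Local Open Scope ring_scope.

(* R[x1,x2] : x1 = 'X_0, x2 = 'X_1 *)
Notation RX2 R := {mpoly R[2]}.

Definition circ (R : realType) : RX2 R :=
  'X_(0 : 'I_2) ^+ 2 + 'X_(1 : 'I_2) ^+ 2 - 1.

(* equality in R[C] = R[x1,x2]/(x1^2+x2^2-1) *)
Definition eqC (R : realType) (p q : RX2 R) : Prop :=
  exists h : RX2 R, p - q = h * circ R.

(* R[V] = R[C][y], represented by {poly R[x1,x2]}; the ideal of V is
   generated by the constant polynomial circ. *)
Definition eqV (R : realType) (p q : {poly RX2 R}) : Prop :=
  exists h : {poly RX2 R}, p - q = h * (circ R)%:P.

Definition sos_C (R : realType) (b : RX2 R) : Prop :=
  exists s : seq (RX2 R), eqC b (\sum_(t <- s) t ^+ 2).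

Definition sos_V (R : realType) (f : {poly RX2 R}) : Prop :=
  exists s : seq {poly RX2 R}, eqV f (\sum_(t <- s) t ^+ 2).

Definition on_C_cplx (R : realType) (z : 'I_2 -> R[i]) : Prop :=
  z 0 ^+ 2 + z 1 ^+ 2 = 1.

Definition evalC (R : realType) (b : RX2 R) (z : 'I_2 -> R[i]) : R[i] :=
  mmap (real_complex R) z b.

Definition only_real_zeros (R : realType) (b : RX2 R) : Prop :=
  forall z : 'I_2 -> R[i], on_C_cplx z -> evalC b z = 0 ->
    forall k : 'I_2, complex.Im (z k) = 0.

(* Main.v *)
Require Import Defs.
From HB Require Import structures.
From mathcomp Require Import all_boot all_order all_algebra.
From mathcomp Require Import mpoly.
From mathcomp Require Import complex.
From mathcomp Require Import reals.
From mathcomp Require Import ring lra zify.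
Import Order.TTheory GRing.Theory Num.Theory.
Set Implicit Arguments. Unset Strict Implicit.
Local Open Scope ring_scope.

Section Generic.
Variables (S : comNzRingType) (X1 X2 P1 P2 H : S).
Hypothesis hP : P1 ^+ 2 + P2 ^+ 2 = 1.
Hypothesis hH : H + H = 1.

Lemma sq_div (A B : S) : exists s1 s2 K : S,
  ((X1 - P1) * A + (X2 - P2) * B) ^+ 2 =
  (1 - P1 * X1 - P2 * X2) * (s1 ^+ 2 + s2 ^+ 2) + K * (X1 ^+ 2 + X2 ^+ 2 - 1).
Proof.
pose U := P1 * X1 + P2 * X2. pose V := - P2 * X1 + P1 * X2.
pose A2 := P1 * A + P2 * B. pose B2 := - P2 * A + P1 * B.
pose P := (1 - U) * A2 - V * B2. pose Q := V * A2 - (1 + U) * B2.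
pose E := U ^+ 2 + V ^+ 2 - 1.
pose W := 2%:R * B2 ^+ 2 - (1 - U) * (A2 ^+ 2 + B2 ^+ 2).
exists (H * (P + Q)), (H * (P - Q)), (H * W).
have e1 : (X1 - P1) * A + (X2 - P2) * B = (U - 1) * A2 + V * B2.
  have -> : (U - 1) * A2 + V * B2 =
     (P1 ^+ 2 + P2 ^+ 2) * (X1 * A + X2 * B) - P1 * A - P2 * B.
    by rewrite /U /V /A2 /B2; ring.
  by rewrite hP; ring.
have e2 : E = X1 ^+ 2 + X2 ^+ 2 - 1.
  have -> : E = (P1 ^+ 2 + P2 ^+ 2) * (X1 ^+ 2 + X2 ^+ 2) - 1.
    by rewrite /E /U /V; ring.
  by rewrite hP; ring.
have e3 : 2%:R * ((U - 1) * A2 + V * B2) ^+ 2 = (1 - U) * (P ^+ 2 + Q ^+ 2) + E * W.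
  by rewrite /P /Q /E /W; ring.
have e4 : H * (P ^+ 2 + Q ^+ 2) = (H * (P + Q)) ^+ 2 + (H * (P - Q)) ^+ 2.
  have -> : (H * (P + Q)) ^+ 2 + (H * (P - Q)) ^+ 2 = H * (H + H) * (P ^+ 2 + Q ^+ 2)
    by ring.
  by rewrite hH mulr1.
have e5 : forall x : S, x = H * (2%:R * x).
  move=> x; have -> : H * (2%:R * x) = (H + H) * x by ring.
  by rewrite hH mul1r.
rewrite e1 (e5 (_ ^+ 2)) e3 -e2 -e4.
have -> : 1 - P1 * X1 - P2 * X2 = 1 - U by rewrite /U; ring.
ring.
Qed.

Lemma sos_div (s : seq S) :
  (forall t, t \in s -> exists A B, t = (X1 - P1) * A + (X2 - P2) * B) ->
  exists (s' : seq S) (K : S),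
  \sum_(t <- s) t ^+ 2 =
  (1 - P1 * X1 - P2 * X2) * \sum_(t <- s') t ^+ 2 + K * (X1 ^+ 2 + X2 ^+ 2 - 1).
Proof.
elim: s => [|t s IH] hs.
  by exists [::], 0; rewrite !big_nil; ring.
have [|s' [K hK]] := IH.
  by move=> u hu; apply: hs; rewrite inE hu orbT.
have [A [B ->]] := hs t (mem_head _ _).
have [s1 [s2 [K' hK']]] := sq_div A B.
exists [:: s1, s2 & s'], (K' + K).
rewrite !big_cons hK hK'; ring.
Qed.
End Generic.


Section MPB.
Variable R : realType.
Local Notation M := {mpoly R[2]}.
Local Notation x1 := ('X_(0 : 'I_2) : M).
Local Notation x2 := ('X_(1 : 'I_2) : M).

Lemma ord2_cases (i : 'I_2) : i = 0 \/ i = 1.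
Proof. by case: i => [[|[|k]] hk]; [left|right|by []]; apply/val_inj. Qed.

Definition taylorP (p : 'I_2 -> R) (q : M) := exists ab : M * M,
  q - (q.@[p])%:MP = (x1 - (p 0)%:MP) * ab.1 + (x2 - (p 1)%:MP) * ab.2.

Lemma taylorD p q1 q2 : taylorP p q1 -> taylorP p q2 -> taylorP p (q1 + q2).
Proof.
move=> [[a1 b1] /= h1] [[a2 b2] /= h2]; exists (a1 + a2, b1 + b2) => /=.
rewrite mevalD rmorphD /=.
have -> : q1 + q2 - ((q1.@[p])%:MP + (q2.@[p])%:MP) =
   (q1 - (q1.@[p])%:MP) + (q2 - (q2.@[p])%:MP) by ring.
rewrite h1 h2; ring.
Qed.

Lemma taylorM p q1 q2 : taylorP p q1 -> taylorP p q2 -> taylorP p (q1 * q2).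
Proof.
move=> [[a1 b1] /= h1] [[a2 b2] /= h2].
exists (a1 * q2 + (q1.@[p])%:MP * a2, b1 * q2 + (q1.@[p])%:MP * b2) => /=.
rewrite mevalM rmorphM /=.
have -> : q1 * q2 - (q1.@[p])%:MP * (q2.@[p])%:MP =
   (q1 - (q1.@[p])%:MP) * q2 + (q1.@[p])%:MP * (q2 - (q2.@[p])%:MP) by ring.
rewrite h1 h2; ring.
Qed.

Lemma taylorC p c : taylorP p c%:MP.
Proof. by exists (0, 0); rewrite mevalC /=; ring. Qed.

Lemma taylorX p (i : 'I_2) : taylorP p 'X_i.
Proof.
rewrite /taylorP mevalXU.
by case: (ord2_cases i) => ->; [exists (1, 0) | exists (0, 1)]; rewrite /=; ring.
Qed.

Lemma taylorXn p (i : 'I_2) n : taylorP p ('X_i ^+ n).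
Proof.
elim: n => [|n IH]; first by rewrite expr0 -(rmorph1 (@mpolyC 2 R)); apply: taylorC.
by rewrite exprS; apply: taylorM => //; apply: taylorX.
Qed.

Lemma taylor p q : taylorP p q.
Proof.
elim/mpolyind: q => [|c m q _ _ IH].
  by rewrite -(rmorph0 (@mpolyC 2 R)); apply: taylorC.
apply: taylorD => //.
rewrite -mul_mpolyC; apply: taylorM; first exact: taylorC.
rewrite mpolyXE_id big_ord_recl big_ord1.
by apply: taylorM; apply: taylorXn.
Qed.
End MPB.


Lemma inf_roots (F : numFieldType) (q : {poly F}) :
  (forall j : nat, q.[(j.+2)%:R] = 0) -> q = 0.
Proof.
move=> hq; apply/eqP; apply/negPn/negP => nq.
pose rs := [seq (j.+2)%:R : F | j <- iota 0 (size q)].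
suff: (size rs < size q)%N by rewrite size_map size_iota ltnn.
apply: max_poly_roots nq _ _.
  by apply/allP => x /mapP [j _ ->]; apply/rootP.
rewrite map_inj_uniq ?iota_uniq // => j k /eqP; rewrite eqr_nat.
by move/eqP => [].
Qed.

Section MPD.
Variable R : realType.
Local Notation M := {mpoly R[2]}.
Local Notation x1 := ('X_(0 : 'I_2) : M).
Local Notation x2 := ('X_(1 : 'I_2) : M).
Local Notation C := (R[i]).






Lemma sos_poly_eq0 (s : seq {poly R}) :
  \sum_(t <- s) t ^+ 2 = 0 -> forall t, t \in s -> t = 0.
Proof.
move=> hs t ts; apply: inf_roots => j.
have := congr1 (fun q => q.[(j.+2)%:R]) hs => /=.
rewrite horner0 horner_sum => /eqP; rewrite psumr_eq0; last first.
  by move=> u _; rewrite hornerE sqr_ge0.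
move/allP/(_ t ts) => /=; rewrite hornerE.
by rewrite sqrf_eq0 => /eqP.
Qed.

Definition e (P : {poly R}) : M := (map_poly (@mpolyC 2 R) P).[x1].

Lemma eD P Q : e (P + Q) = e P + e Q.
Proof. by rewrite /e rmorphD hornerD. Qed.
Lemma eN P : e (- P) = - e P.
Proof. by rewrite /e rmorphN hornerN. Qed.
Lemma eB P Q : e (P - Q) = e P - e Q.
Proof. by rewrite eD eN. Qed.
Lemma eM P Q : e (P * Q) = e P * e Q.
Proof. by rewrite /e rmorphM hornerM. Qed.
Lemma eC c : e c%:P = c%:MP.
Proof. by rewrite /e map_polyC hornerC. Qed.
Lemma eX : e 'X = x1.
Proof. by rewrite /e map_polyX hornerX. Qed.
Lemma e1 : e 1 = 1.
Proof. by rewrite -polyC1 eC. Qed.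
Lemma e0 : e 0 = 0.
Proof. by rewrite -polyC0 eC. Qed.
Lemma eXn n : e ('X ^+ n) = x1 ^+ n.
Proof. by elim: n => [|n IH]; rewrite ?expr0 ?e1 // !exprS eM eX IH. Qed.

Definition evalM (z : 'I_2 -> C) := mmap (real_complex R) z.

Lemma evalC_e P z : evalC (e P) z = (map_poly (real_complex R) P).[z 0].
Proof.
rewrite /evalC /e -horner_map -map_poly_comp /= mmapX mmap1U.
congr (_.[_]); apply: eq_map_poly => c /=; by rewrite mmapC.
Qed.

Lemma evalC_X z (i : 'I_2) : evalC ('X_i : M) z = z i.
Proof. by rewrite /evalC mmapX mmap1U. Qed.


Lemma evalC_M z (p q : M) : evalC (p * q) z = evalC p z * evalC q z.
Proof. by rewrite /evalC rmorphM. Qed.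
Lemma evalC_D z (p q : M) : evalC (p + q) z = evalC p z + evalC q z.
Proof. by rewrite /evalC rmorphD. Qed.
Lemma evalC_B z (p q : M) : evalC (p - q) z = evalC p z - evalC q z.
Proof. by rewrite /evalC rmorphB. Qed.
Lemma evalC_const z c : evalC (c%:MP : M) z = c%:C%C.
Proof. by rewrite /evalC mmapC. Qed.

Lemma evalC_1 z : evalC (1 : M) z = 1.
Proof. by rewrite /evalC rmorph1. Qed.

Lemma evalC_circ z : evalC (circ R) z = z 0 ^+ 2 + z 1 ^+ 2 - 1.
Proof. by rewrite /circ !evalC_B evalC_D !expr2 !evalC_M !evalC_X evalC_1. Qed.

Lemma meval_e P (p : 'I_2 -> R) : (e P).@[p] = P.[p 0].
Proof.
rewrite /e -horner_map -map_poly_comp /= mevalXU.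
by rewrite map_poly_id // => c _ /=; rewrite mevalC.
Qed.

Lemma meval_circ (p : 'I_2 -> R) : (circ R).@[p] = p 0 ^+ 2 + p 1 ^+ 2 - 1.
Proof. by rewrite /circ !mevalB mevalD !mevalM !mevalXU meval1 !expr2. Qed.

Lemma eqC_refl (p : M) : Defs.eqC p p.
Proof. by exists 0; rewrite subrr mul0r. Qed.
Lemma eqC_sym (p q : M) : Defs.eqC p q -> Defs.eqC q p.
Proof. by move=> [h hh]; exists (- h); rewrite mulNr -hh opprB. Qed.
Lemma eqC_trans (p q r : M) : Defs.eqC p q -> Defs.eqC q r -> Defs.eqC p r.
Proof.
move=> [h hh] [k hk]; exists (h + k).
by rewrite mulrDl -hh -hk; ring.
Qed.
Lemma eqC_add (p q p' q' : M) : Defs.eqC p q -> Defs.eqC p' q' -> Defs.eqC (p + p') (q + q').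
Proof.
move=> [h hh] [k hk]; exists (h + k).
by rewrite mulrDl -hh -hk; ring.
Qed.
Lemma eqC_mul (p q p' q' : M) : Defs.eqC p q -> Defs.eqC p' q' -> Defs.eqC (p * p') (q * q').
Proof.
move=> [h hh] [k hk]; exists (h * p' + q * k).
have -> : p * p' - q * q' = (p - q) * p' + q * (p' - q') by ring.
by rewrite hh hk; ring.
Qed.

Definition NF (q : M) := exists B : {poly R} * {poly R},
  Defs.eqC q (e B.1 + x2 * e B.2).

Lemma nf_mulE A0 A1 B0 B1 :
  Defs.eqC ((e A0 + x2 * e A1) * (e B0 + x2 * e B1))
      (e (A0 * B0 + (1 - 'X ^+ 2) * (A1 * B1)) + x2 * e (A0 * B1 + A1 * B0)).
Proof.
exists (e A1 * e B1).
rewrite !(eD, eM, eB, eN, e1, eXn, eX) /circ; ring.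
Qed.

Lemma NF_D p q : NF p -> NF q -> NF (p + q).
Proof.
move=> [[A0 A1] /= hA] [[B0 B1] /= hB]; exists (A0 + B0, A1 + B1) => /=.
apply: (eqC_trans (eqC_add hA hB)); rewrite !eD; exists 0; rewrite mul0r; ring.
Qed.

Lemma NF_M p q : NF p -> NF q -> NF (p * q).
Proof.
move=> [[A0 A1] /= hA] [[B0 B1] /= hB].
exists (A0 * B0 + (1 - 'X ^+ 2) * (A1 * B1), A0 * B1 + A1 * B0) => /=.
apply: (eqC_trans (eqC_mul hA hB)); apply: nf_mulE.
Qed.

Lemma NF_C c : NF c%:MP.
Proof. by exists (c%:P, 0) => /=; rewrite eC e0 mulr0 addr0; apply: eqC_refl. Qed.

Lemma NF_X (i : 'I_2) : NF 'X_i.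
Proof.
case: (ord2_cases i) => ->.
  by exists ('X, 0) => /=; rewrite eX e0 mulr0 addr0; apply: eqC_refl.
by exists (0, 1) => /=; rewrite e0 e1 mulr1 add0r; apply: eqC_refl.
Qed.

Lemma NF_Xn (i : 'I_2) n : NF ('X_i ^+ n).
Proof.
elim: n => [|n IH]; first by rewrite expr0 -(rmorph1 (@mpolyC 2 R)); apply: NF_C.
by rewrite exprS; apply: NF_M => //; apply: NF_X.
Qed.

Lemma nf_ex q : NF q.
Proof.
elim/mpolyind: q => [|c m q _ _ IH].
  by rewrite -(rmorph0 (@mpolyC 2 R)); apply: NF_C.
apply: NF_D => //.
rewrite -mul_mpolyC; apply: NF_M; first exact: NF_C.
rewrite mpolyXE_id big_ord_recl big_ord1.
by apply: NF_M; apply: NF_Xn.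
Qed.


Lemma Im0_real (x : C) : complex.Im x = 0 -> x = (complex.Re x)%:C%C.
Proof. by case: x => a b /= ->. Qed.

Definition zpt (a s : C) : 'I_2 -> C := fun i => if i == 0 then a else s.

Lemma zpt0 a s : zpt a s 0 = a. Proof. by []. Qed.
Lemma zpt1 a s : zpt a s 1 = s. Proof. by []. Qed.

Lemma nf_uniq0 (D0 D1 : {poly R}) (h : M) :
  e D0 + x2 * e D1 = h * circ R -> D0 = 0 /\ D1 = 0.
Proof.
move=> hD.
pose rc := real_complex R.
have key : forall j : nat, (map_poly rc D0).[(j.+2)%:R] = 0 /\
                           (map_poly rc D1).[(j.+2)%:R] = 0.
  move=> j; set a : C := (j.+2)%:R.
  set s := complex.sqrtc (1 - a ^+ 2).
  have hs : s ^+ 2 = 1 - a ^+ 2 by rewrite complex.sqr_sqrtc.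
  have ev : forall t : C, t ^+ 2 = 1 - a ^+ 2 ->
      (map_poly rc D0).[a] + t * (map_poly rc D1).[a] = 0.
    move=> t ht; have := congr1 (fun q => evalC q (zpt a t)) hD => /=.
    rewrite evalC_D evalC_M !evalC_e evalC_X evalC_M evalC_circ zpt0 zpt1 ht.
    by move=> ->; ring.
  have h1 := ev s hs.
  have h2 := ev (- s); rewrite sqrrN in h2; have {}h2 := h2 hs.
  have hD0 : (map_poly rc D0).[a] = 0.
    have e2 : (map_poly rc D0).[a] *+ 2 = ((map_poly rc D0).[a] + s * (map_poly rc D1).[a])
        + ((map_poly rc D0).[a] + - s * (map_poly rc D1).[a]) by ring.
    rewrite h1 h2 addr0 in e2; apply/eqP.
    by move/eqP: e2; rewrite mulrn_eq0.
  split => //; move: h1; rewrite hD0 add0r => /eqP; rewrite mulf_eq0 => /orP [/eqP s0|/eqP //].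
  move: hs; rewrite s0 expr0n /= => /eqP; rewrite eq_sym subr_eq0 => /eqP.
  rewrite /a -natrX => /eqP; rewrite (eqr_nat _ 1).
  by rewrite !expnS expn0.
split.
  apply/eqP; rewrite -(map_poly_eq0 rc); apply/eqP; apply: inf_roots => j.
  by case: (key j).
apply/eqP; rewrite -(map_poly_eq0 rc); apply/eqP; apply: inf_roots => j.
by case: (key j).
Qed.

Lemma nf_uniq (B0 B1 T0 T1 : {poly R}) :
  Defs.eqC (e B0 + x2 * e B1) (e T0 + x2 * e T1) -> B0 = T0 /\ B1 = T1.
Proof.
move=> [h hh].
have : e (B0 - T0) + x2 * e (B1 - T1) = h * circ R by rewrite !eB -hh; ring.
by move/nf_uniq0 => [h0 h1]; split; apply/eqP; rewrite -subr_eq0; apply/eqP.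
Qed.

End MPD.


Section MPE.
Variable R : realType.
Local Notation M := {mpoly R[2]}.
Local Notation x1 := ('X_(0 : 'I_2) : M).
Local Notation x2 := ('X_(1 : 'I_2) : M).
Local Notation C := (R[i]).
Local Notation e := (@e R).

Definition Nf (B0 B1 : {poly R}) := B0 ^+ 2 - (1 - 'X ^+ 2) * B1 ^+ 2.

Definition Lp (p : 'I_2 -> R) : M := 1 - (p 0)%:MP * x1 - (p 1)%:MP * x2.

Lemma Lp_nf p : Lp p = e (1 - (p 0)%:P * 'X) + x2 * e (- (p 1)%:P).
Proof. by rewrite /Lp eB e1 eM eC eX eN eC; ring. Qed.

Lemma NfA (p : 'I_2 -> R) : p 0 ^+ 2 + p 1 ^+ 2 = 1 ->
  Nf (1 - (p 0)%:P * 'X) (- (p 1)%:P) = ('X - (p 0)%:P) ^+ 2.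
Proof.
move=> hp.
have hk : ((p 0)%:P) ^+ 2 + ((p 1)%:P) ^+ 2 = 1 :> {poly R}.
  by rewrite -[RHS]polyC1 -hp rmorphD !rmorphXn.
have -> : Nf (1 - (p 0)%:P * 'X) (- (p 1)%:P) = ('X - (p 0)%:P) ^+ 2 +
   (((p 0)%:P) ^+ 2 + ((p 1)%:P) ^+ 2 - 1) * ('X ^+ 2 - 1) by rewrite /Nf; ring.
by rewrite hk subrr mul0r addr0.
Qed.

Lemma Nf_mul A0 A1 B0 B1 :
  Nf (A0 * B0 + (1 - 'X ^+ 2) * (A1 * B1)) (A0 * B1 + A1 * B0) = Nf A0 A1 * Nf B0 B1.
Proof. by rewrite /Nf; ring. Qed.

Lemma cancel_mp (p : 'I_2 -> R) (q k : M) : p 0 ^+ 2 + p 1 ^+ 2 = 1 ->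
  Lp p * q = k * circ R -> exists k' : M, q = k' * circ R.
Proof.
move=> hp hq.
have [[Q0 Q1] /= [hq0 hhq]] := nf_ex q.
have hT := nf_mulE (1 - (p 0)%:P * 'X) (- (p 1)%:P) Q0 Q1.
rewrite -Lp_nf in hT.
set T0 := _ * Q0 + _ in hT; set T1 := _ * Q1 + _ in hT.
have [hT0 hT1] : T0 = 0 /\ T1 = 0.
  move: hT => [h hh].
  apply: (@nf_uniq0 _ _ _ (k - Lp p * hq0 - h)).
  have nfq : e Q0 + x2 * e Q1 = q - hq0 * circ R by rewrite -hhq; ring.
  have -> : e T0 + x2 * e T1 = Lp p * (e Q0 + x2 * e Q1) - h * circ R
    by rewrite -hh; ring.
  by rewrite nfq mulrBr hq; ring.
have A0n : 1 - (p 0)%:P * 'X != 0 :> {poly R}.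
  apply/negP => /eqP /(congr1 (horner^~ 0)) /eqP.
  by rewrite !hornerE /= ?mulr0 ?subr0 oner_eq0.
have hQ1 : Q1 = 0.
  have : ('X - (p 0)%:P) ^+ 2 * Q1 = 0.
    rewrite -NfA //.
    have -> : Nf (1 - (p 0)%:P * 'X) (- (p 1)%:P) * Q1 =
      (1 - (p 0)%:P * 'X) * T1 + (p 1)%:P * T0 by rewrite /T0 /T1 /Nf; ring.
    by rewrite hT0 hT1; ring.
  by move/eqP; rewrite mulf_eq0 expf_eq0 polyXsubC_eq0 andbF /= => /eqP.
have hQ0 : Q0 = 0.
  move: hT0; rewrite /T0 hQ1 !mulr0 addr0 => /eqP; rewrite mulf_eq0.
  by rewrite (negPf A0n) /= => /eqP.
by exists hq0; move: hhq; rewrite hQ0 hQ1 e0 mulr0 addr0 subr0.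
Qed.

End MPE.


Section MPF.
Variable R : realType.
Local Notation M := {mpoly R[2]}.
Local Notation x1 := ('X_(0 : 'I_2) : M).
Local Notation x2 := ('X_(1 : 'I_2) : M).
Local Notation C := (R[i]).
Local Notation e := (@e R).

Lemma cancel_poly (p : 'I_2 -> R) (H K : {poly M}) : p 0 ^+ 2 + p 1 ^+ 2 = 1 ->
  (Lp p)%:P * H = K * (circ R)%:P -> exists K' : {poly M}, H = K' * (circ R)%:P.
Proof.
move=> hp hH.
have ex : forall i, exists k : M, H`_i == k * circ R.
  move=> i; have := congr1 (fun P : {poly M} => P`_i) hH => /=; rewrite coefCM coefMC.
  by move/(cancel_mp hp) => [k' ->]; exists k'.
exists (\poly_(i < size H) xchoose (ex i)).
apply/polyP => i; rewrite coefMC coef_poly.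
case: ltnP => hi; first by apply/eqP; exact: (xchooseP (ex i)).
by rewrite mul0r nth_default.
Qed.

Lemma taylor_poly (p : 'I_2 -> R) (t : {poly M}) : map_poly (meval p) t = 0 ->
  exists A B : {poly M}, t = (x1 - (p 0)%:MP)%:P * A + (x2 - (p 1)%:MP)%:P * B.
Proof.
move=> ht.
have ex : forall i, exists ab : M * M, t`_i - ((t`_i).@[p])%:MP ==
    (x1 - (p 0)%:MP) * ab.1 + (x2 - (p 1)%:MP) * ab.2.
  by move=> i; have [ab hab] := @taylor R p t`_i; exists ab; apply/eqP.
pose ab i := xchoose (ex i).
exists (\poly_(i < size t) (ab i).1), (\poly_(i < size t) (ab i).2).
apply/polyP => i; rewrite coefD !coefCM !coef_poly.
case: ltnP => hi; last by rewrite nth_default // !mulr0 addr0.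
have := xchooseP (ex i); rewrite -/(ab i) => /eqP <-.
have : (map_poly (meval p) t)`_i = 0 by rewrite ht coef0.
by rewrite coef_map /= => ->; rewrite subr0.
Qed.

Lemma size_add_lead (p q : {poly R}) : 0 <= lead_coef p -> 0 <= lead_coef q ->
  size (p + q) = maxn (size p) (size q).
Proof.
move=> hp hq.
case: (ltngtP (size p) (size q)) => hs.
- by rewrite addrC size_polyDl // (maxn_idPr (ltnW hs)).
- by rewrite size_polyDl // (maxn_idPl (ltnW hs)).
case: (eqVneq p 0) => [p0|p0]; first by rewrite p0 add0r -hs p0.
have q0 : q != 0 by rewrite -size_poly_eq0 -hs size_poly_eq0.
apply/eqP; rewrite eqn_leq.
rewrite (leq_trans (size_polyD _ _)) ?hs ?maxnn //= -hs.
have lp : 0 < lead_coef p by rewrite lt_def lead_coef_eq0 p0.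
have lq : 0 < lead_coef q by rewrite lt_def lead_coef_eq0 q0.
rewrite leqNgt; apply/negP => hlt.
have : (p + q)`_(size p).-1 = 0.
  by rewrite nth_default //; rewrite -ltnS prednK // lt0n size_poly_eq0.
rewrite coefD /lead_coef hs => /eqP; rewrite -/(lead_coef q) -hs -/(lead_coef p).
by apply/negP; rewrite gt_eqF // addr_gt0.
Qed.

Lemma Nf_small (B0 B1 : {poly R}) : (size (Nf B0 B1) <= 1)%N ->
  B1 = 0 /\ (size B0 <= 1)%N.
Proof.
have -> : Nf B0 B1 = B0 * B0 + ('X^2 - 1%:P) * (B1 * B1).
  by rewrite /Nf polyC1; ring.
have lX : lead_coef ('X^2 - 1%:P : {poly R}) = 1.
  by rewrite lead_coefDl ?lead_coefXn // size_polyXn size_polyN size_polyC; case: eqP.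
rewrite size_add_lead; first last.
- by rewrite lead_coefM lX mul1r lead_coefM -expr2 sqr_ge0.
- by rewrite lead_coefM -expr2 sqr_ge0.
rewrite geq_max => /andP [h0 h1]; split.
  apply/eqP/negPn/negP => B10; move: h1.
  rewrite size_mul ?mulf_neq0 //; last by rewrite -lead_coef_eq0 lX oner_eq0.
  rewrite (size_mul B10 B10) size_XnsubC //.
case: (eqVneq B0 0) => [->|B00]; first by rewrite size_poly0.
by move: h0; rewrite size_mul //; case: (size B0) => [|[|n]] //; rewrite addnS.
Qed.

End MPF.


Section MPG.
Variable R : realType.
Local Notation M := {mpoly R[2]}.
Local Notation x1 := ('X_(0 : 'I_2) : M).
Local Notation x2 := ('X_(1 : 'I_2) : M).
Local Notation C := (R[i]).
Local Notation e := (@e R).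
Local Notation rc := (real_complex R).

Lemma find_zero (b : M) B0 B1 : only_real_zeros b ->
  Defs.eqC b (e B0 + x2 * e B1) -> (1 < size (Nf B0 B1))%N ->
  exists p : 'I_2 -> R, p 0 ^+ 2 + p 1 ^+ 2 = 1 /\ b.@[p] = 0.
Proof.
move=> hz [h hb] hN.

have sN : size (map_poly rc (Nf B0 B1)) != 1.
  by rewrite size_map_poly; apply/eqP => h1; rewrite h1 in hN.
have /closed_rootP [a ha] := sN.
set u := (map_poly rc B0).[a]; set v := (map_poly rc B1).[a].
have huv : u ^+ 2 = (1 - a ^+ 2) * v ^+ 2.
  have eN : map_poly rc (Nf B0 B1) =
     (map_poly rc B0) ^+ 2 - (1 - 'X ^+ 2) * (map_poly rc B1) ^+ 2.
    rewrite /Nf !(rmorphB, rmorphM, rmorphXn, rmorph1) /= map_polyX; ring.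
  move/rootP: ha; rewrite eN !(hornerD, hornerN, hornerM, horner_exp, hornerX, hornerC).
  rewrite -/u -/v => /eqP; rewrite subr_eq0 => /eqP; rewrite !expr2.
  done.
have [s [hs hus]] : exists s : C, s ^+ 2 = 1 - a ^+ 2 /\ u + s * v = 0.
  case: (eqVneq v 0) => [v0|v0].
    exists (complex.sqrtc (1 - a ^+ 2)); split; first exact: complex.sqr_sqrtc.
    move: huv; rewrite v0 expr0n /= mulr0 => /eqP; rewrite sqrf_eq0 => /eqP ->.
    by rewrite mulr0 addr0.
  exists (- u / v); split; last by rewrite mulfVK // subrr.
  rewrite exprMn exprVn sqrrN huv mulfK //.
  by rewrite expf_neq0.
pose z := zpt a s.
have hC : on_C_cplx z by rewrite /on_C_cplx /z zpt0 zpt1 hs; ring.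
have hbe : b = e B0 + x2 * e B1 + h * circ R by rewrite -hb; ring.
have hbz : evalC b z = 0.
  rewrite hbe evalC_D evalC_M evalC_circ evalC_D evalC_M !evalC_e evalC_X.
  rewrite /z zpt0 zpt1 hs -/u -/v hus; ring.
have hIm := hz z hC hbz.
have za : a = (complex.Re a)%:C%C by apply: Im0_real; have := hIm 0; rewrite /z zpt0.
have zs : s = (complex.Re s)%:C%C by apply: Im0_real; have := hIm 1; rewrite /z zpt1.
pose p (i : 'I_2) := if i == 0 then complex.Re a else complex.Re s.
have p0 : p 0 = complex.Re a by [].
have p1 : p 1 = complex.Re s by [].
have hp : p 0 ^+ 2 + p 1 ^+ 2 = 1.
  have := hC; rewrite /on_C_cplx /z zpt0 zpt1 za zs -!rmorphXn -rmorphD.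
  by rewrite -(rmorph1 (real_complex R)) p0 p1 => /complexI.
exists p; split => //.
rewrite hbe !mevalD !mevalM meval_circ hp subrr mulr0 addr0.
rewrite !meval_e mevalXU p0 p1.
move: hus; rewrite /u /v za zs !horner_map -rmorphM -rmorphD.
by rewrite -(rmorph0 (real_complex R)) => /complexI.
Qed.

End MPG.


Section MPH.
Variable R : realType.
Local Notation M := {mpoly R[2]}.
Local Notation x1 := ('X_(0 : 'I_2) : M).
Local Notation x2 := ('X_(1 : 'I_2) : M).
Local Notation C := (R[i]).
Local Notation e := (@e R).
Local Notation rc := (real_complex R).

Lemma base_case (b : M) B0 B1 (f g : {poly M}) :
  Defs.eqC b (e B0 + x2 * e B1) -> (size (Nf B0 B1) <= 1)%N ->
  sos_V f -> sos_C b -> only_real_zeros b -> eqV f (b%:P * g) -> sos_V g.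
Proof.
move=> [h hb] hN [ts [h1 hf]] [ss [h4 hbs]] hz [h2 hfg].
have [B10 hB0] := Nf_small hN.
set k := B0`_0.
have hB0k : B0 = k%:P := size1_polyC hB0.
have hb3 : b - k%:MP = h * circ R.
  by rewrite -hb hB0k B10 eC e0 mulr0 addr0.
have k0 : k != 0.
  apply/negP => /eqP k0.
  pose a : C := 2%:R; pose s := complex.sqrtc (1 - a ^+ 2).
  have hs : s ^+ 2 = 1 - a ^+ 2 by rewrite complex.sqr_sqrtc.
  have hC : on_C_cplx (zpt a s) by rewrite /on_C_cplx zpt0 zpt1 hs; ring.
  have hbz : evalC b (zpt a s) = 0.
    have -> : b = h * circ R by rewrite -hb3 k0 subr0.
    by rewrite evalC_M evalC_circ zpt0 zpt1 hs; ring.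
  have := hz _ hC hbz 1; rewrite zpt1 => /Im0_real hs'.
  have : (complex.Re s) ^+ 2 = 1 - 2%:R ^+ 2.
    move: hs; rewrite hs' /a -(rmorph_nat rc 2) -!rmorphXn -(rmorph1 rc) -rmorphB.
    by move/complexI.
  have := sqr_ge0 (complex.Re s); lra.
have kpos : 0 < k.
  rewrite lt_def k0 /=.
  pose p1 : 'I_2 -> R := fun i => if i == 0 then 1 else 0.
  have hc : (circ R).@[p1] = 0 by rewrite meval_circ /p1 /=; ring.
  have : b.@[p1] = k.
    by have := congr1 (meval p1) hb3; rewrite mevalB mevalM hc mulr0 mevalC => /eqP; rewrite subr_eq0 => /eqP.
  move=> <-.
  have := congr1 (meval p1) hbs; rewrite mevalB mevalM hc mulr0 => /eqP; rewrite subr_eq0 => /eqP ->.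
  rewrite (big_morph (meval p1) (mevalD p1) (meval0 p1)); apply: sumr_ge0 => t _.
  by rewrite expr2 mevalM -expr2 sqr_ge0.
pose c : {poly M} := ((Num.sqrt k^-1)%:MP)%:P.
pose ki : {poly M} := ((k^-1)%:MP)%:P.
pose kk : {poly M} := (k%:MP)%:P.
have hc2 : c ^+ 2 = ki.
  by rewrite /c /ki -!rmorphXn sqr_sqrtr // invr_ge0 ltW.
have hki : ki * kk = 1.
  by rewrite /ki /kk -!rmorphM mulVf // !rmorph1.
exists [seq c * t | t <- ts].
set S := \sum_(t <- ts) t ^+ 2 in hf.
have -> : \sum_(t <- [seq c * t | t <- ts]) t ^+ 2 = ki * S.
  by rewrite big_map /S mulr_sumr; apply: eq_bigr => t _; rewrite exprMn hc2.
have ebP : b%:P = kk + (h%:P) * (circ R)%:P.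
  by rewrite /kk -rmorphM -rmorphD -hb3; congr (_%:P); ring.
have ef : f = S + h1 * (circ R)%:P by rewrite -hf; ring.
rewrite ef ebP in hfg.
exists (ki * (h1 - h2 - h%:P * g)).
apply/eqP; rewrite -subr_eq0; apply/eqP.
have -> : g - ki * S - ki * (h1 - h2 - h%:P * g) * (circ R)%:P =
   (1 - ki * kk) * g
   - ki * (S + h1 * (circ R)%:P - (kk + h%:P * (circ R)%:P) * g - h2 * (circ R)%:P).
  by ring.
by rewrite hfg hki !subrr !mul0r mulr0 subrr.
Qed.

End MPH.


Section MPI.
Variable R : realType.
Local Notation M := {mpoly R[2]}.
Local Notation x1 := ('X_(0 : 'I_2) : M).
Local Notation x2 := ('X_(1 : 'I_2) : M).
Local Notation C := (R[i]).
Local Notation e := (@e R).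
Local Notation rc := (real_complex R).

Lemma main_ind n : forall (b : M) B0 B1 (f g : {poly M}),
  Defs.eqC b (e B0 + x2 * e B1) -> (size (Nf B0 B1) <= n)%N ->
  sos_V f -> sos_C b -> only_real_zeros b -> eqV f (b%:P * g) -> sos_V g.
Proof.
elim: n => [|n IH] b B0 B1 f g hb hN hf hbs hz hfg.
  by apply: base_case hb _ hf hbs hz hfg; apply: leq_trans hN _.
case: (leqP (size (Nf B0 B1)) 1) => hN1.
  exact: base_case hb hN1 hf hbs hz hfg.
have [p [hp hbp]] := find_zero hz hb hN1.
move: hbs => [ss [h4 hbs]].
have hev : forall t, t \in ss -> t.@[p] = 0.
  have := congr1 (meval p) hbs.
  rewrite mevalB mevalM meval_circ hp subrr mulr0 hbp sub0r => /eqP.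
  rewrite oppr_eq0 (big_morph (meval p) (mevalD p) (meval0 p)) psumr_eq0; last first.
    by move=> t _; rewrite expr2 mevalM -expr2 sqr_ge0.
  move/allP => hall t /hall /=; rewrite expr2 mevalM -expr2 sqrf_eq0 => /eqP.
  done.
have hP : ((p 0)%:MP : M) ^+ 2 + ((p 1)%:MP) ^+ 2 = 1.
  by rewrite -!rmorphXn -rmorphD hp rmorph1.
have h12 : (1 / 2 : R) + 1 / 2 = 1 by lra.
have hH : ((1 / 2 : R)%:MP : M) + (1 / 2)%:MP = 1 by rewrite -rmorphD h12 rmorph1.
have [|s' [K hK]] := @sos_div M x1 x2 _ _ _ hP hH ss.
  move=> t ht; have [[a1 a2] /=] := @taylor R p t.
  by rewrite hev // rmorph0 subr0 => ->; exists a1, a2.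
set b' := \sum_(t <- s') t ^+ 2 in hK.
have hbb' : b - Lp p * b' = (h4 + K) * circ R.
  have -> : b = \sum_(t <- ss) t ^+ 2 + h4 * circ R by rewrite -hbs; ring.
  by rewrite hK /Lp /circ; ring.
move: hf hfg => [ts [h1 hf]] [h2 hfg].
have Ec : map_poly (meval p) (circ R)%:P = 0.
  by rewrite map_polyC /= meval_circ hp subrr polyC0.
have Eb : map_poly (meval p) b%:P = 0 by rewrite map_polyC /= hbp polyC0.
have hsum : \sum_(t <- [seq map_poly (meval p) t | t <- ts]) t ^+ 2 = 0.
  have Ef : map_poly (meval p) f = 0.
    have := congr1 (map_poly (meval p)) hfg.
    by rewrite rmorphB !rmorphM /= Ec Eb mul0r mulr0 subr0.
  have hE : map_poly (meval p) (\sum_(t <- ts) t ^+ 2) = 0.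
    have := congr1 (map_poly (meval p)) hf.
    rewrite rmorphB rmorphM /= Ec mulr0 Ef sub0r => /eqP; rewrite oppr_eq0 => /eqP.
    done.
  rewrite -[RHS]hE big_map rmorph_sum /=; apply: eq_bigr => t _.
  by rewrite rmorphXn.
have hEt : forall t, t \in ts -> map_poly (meval p) t = 0.
  by move=> t ht; apply: (sos_poly_eq0 hsum); apply: map_f.
have hP' : (((p 0)%:MP : M)%:P) ^+ 2 + (((p 1)%:MP : M)%:P) ^+ 2 = 1.
  by rewrite -!rmorphXn -!rmorphD hp !rmorph1.
have hH' : (((1 / 2 : R)%:MP : M)%:P) + ((1 / 2)%:MP)%:P = 1.
  by rewrite -rmorphD hH rmorph1.
have [|ts' [K' hK']] := @sos_div {poly M} x1%:P x2%:P _ _ _ hP' hH' ts.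
  move=> t ht; have [A [B ->]] := taylor_poly (hEt t ht).
  by exists A, B; rewrite !rmorphB.
set f' := \sum_(t <- ts') t ^+ 2 in hK'.
have LP : 1 - ((p 0)%:MP : M)%:P * x1%:P - ((p 1)%:MP : M)%:P * x2%:P = (Lp p)%:P.
  by rewrite /Lp !rmorphB rmorph1 !rmorphM.
have CP : x1%:P ^+ 2 + x2%:P ^+ 2 - 1 = (circ R)%:P.
  by rewrite /circ rmorphB rmorphD !rmorphXn rmorph1.
rewrite LP CP in hK'.
have ef : f = (Lp p)%:P * f' + K' * (circ R)%:P + h1 * (circ R)%:P.
  by rewrite -hK' -hf; ring.
have eb : b%:P = (Lp p)%:P * b'%:P + (h4 + K)%:P * (circ R)%:P.
  by rewrite -!rmorphM -rmorphD -hbb'; congr (_%:P); ring.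
have hcanc : (Lp p)%:P * (f' - b'%:P * g) =
    (h2 - K' - h1 + (h4 + K)%:P * g) * (circ R)%:P.
  have -> : (Lp p)%:P * (f' - b'%:P * g) =
    ((Lp p)%:P * f' + K' * (circ R)%:P + h1 * (circ R)%:P)
    - ((Lp p)%:P * b'%:P + (h4 + K)%:P * (circ R)%:P) * g
    - (K' + h1 - (h4 + K)%:P * g) * (circ R)%:P by ring.
  by rewrite -ef -eb hfg; ring.
have [K3 hK3] := cancel_poly hp hcanc.
have hfg' : eqV f' (b'%:P * g) by exists K3.
have hz' : only_real_zeros b'.
  move=> z hzC hz0; apply: (hz z hzC).
  have -> : b = Lp p * b' + (h4 + K) * circ R by rewrite -hbb'; ring.
  rewrite evalC_D !evalC_M hz0 evalC_circ.
  by move: hzC; rewrite /on_C_cplx => ->; ring.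
have [[C0 C1] /= hb'] := nf_ex b'.
have [eB0 eB1] : B0 = (1 - (p 0)%:P * 'X) * C0 + (1 - 'X ^+ 2) * (- (p 1)%:P * C1) /\
                 B1 = (1 - (p 0)%:P * 'X) * C1 + - (p 1)%:P * C0.
  apply: nf_uniq.
  apply: eqC_trans (eqC_sym hb) _.
  apply: eqC_trans (nf_mulE _ _ C0 C1); rewrite -Lp_nf.
  apply: eqC_trans (eqC_mul (eqC_refl (Lp p)) hb').
  by exists (h4 + K).
have hNB : Nf B0 B1 = ('X - (p 0)%:P) ^+ 2 * Nf C0 C1 by rewrite eB0 eB1 Nf_mul NfA.
have NC0 : Nf C0 C1 != 0.
  by apply/eqP => h0; move: hN1; rewrite hNB h0 mulr0 size_poly0.
apply: IH hb' _ _ _ hz' hfg'.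
- move: hN; rewrite hNB size_mul ?expf_neq0 ?polyXsubC_eq0 // size_exp_XsubC.
  rewrite addSn /= => h; rewrite -ltnS; apply: leq_trans h.
  by rewrite addSn ltnS leq_addl.
- by exists ts', 0; rewrite subrr mul0r.
- by exists s', 0; rewrite subrr mul0r.
Qed.

End MPI.

Unset Implicit Arguments.
Theorem lemma2p2 (R : realType) (f : {poly {mpoly R[2]}}) (b : {mpoly R[2]}) :
  sos_V f -> sos_C b -> only_real_zeros b ->
  forall g : {poly {mpoly R[2]}}, eqV f (b%:P * g) -> sos_V g.
Proof.
move=> hf hb hz g hfg.
have [[B0 B1] /= hB] := nf_ex b.
exact: (@main_ind R _ b B0 B1 f g hB (leqnn _) hf hb hz hfg).
Qed.
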